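(* Let $Q$ be a finite quandle and let $D$ be a diagram of a knot $K$ with $\mathrm{col}_Q(D)>0$. Then there is a finite simple quandle $Q'$ with $|Q'|\le |Q|$ such that $\mathrm{col}_{Q'}(D)>0$.
   Context: A quandle is a set $C$ with a binary operation $*$ such that for all $a,b,c\in C$: (1) $a*a=a$; (2) for all $a,b$ there is a unique $x$ with $a*x=b$; (3) $a*(b*c)=(a*b)*(a*c)$. A quandle is simple if it has at least two elements and its only congruences (equivalence relations compatible with $*$) are the identity relation and the total relation; equivalently, it has no homomorphic images other than itself (up to isomorphism) and the one-element quandle. A knot diagram is a regular planar projection of an oriented tame knot, with over/under information recorded at each crossing. Arcs are the maximal unbroken pieces of the projection. At each crossing, $\alpha$ denotes the over-arc, $\beta$ the under-arc on the right of the oriented $\alpha$, and $\gamma$ the under-arc on its left. A $Q$-coloring of $D$ is a map $f$ from arcs to $Q$ with $f(\alpha)*f(\beta)=f(\gamma)$ at every crossing. It is trivial if it uses only one color. $\mathrm{col}_Q(D)$ is the number of non-trivial $Q$-colorings of $D$. *)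

(* Defs.v *)
From mathcomp Require Import all_boot.
Set Implicit Arguments. Unset Strict Implicit. Unset Printing Implicit Defensive.

Record quandle := Quandle {
  qcar :> finType;
  qop : qcar -> qcar -> qcar;
  qidem : forall a : qcar, qop a a = a;
  qdiv : forall a b : qcar, exists! x : qcar, qop a x = b;
  qdist : forall a b c : qcar, qop a (qop b c) = qop (qop a b) (qop a c)
}.

Definition congruence (Q : quandle) (R : Q -> Q -> Prop) : Prop :=
  (forall a, R a a) /\ (forall a b, R a b -> R b a) /\
  (forall a b c, R a b -> R b c -> R a c) /\
  (forall a a' b b', R a a' -> R b b' -> R (qop a b) (qop a' b')).

Definition simple_quandle (Q : quandle) : Prop :=
  1 < #|Q| /\
  forall R : Q -> Q -> Prop, congruence R ->
    (forall a b, R a b <-> a = b) \/ (forall a b, R a b).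

(** A diagram with n crossings has n arcs;
    walking along the oriented knot, arc i ends at the undercrossing i and arc
    (i+1 mod n) starts there.  [dover i] is the over-arc alpha at crossing i;
    [dsign i] records which of the two under-arcs lies on the right of the
    oriented over-arc: if true, beta = i and gamma = i+1, otherwise
    beta = i+1 and gamma = i.  A zero-crossing diagram (n = 0) has no
    crossings; we model it with no arcs, so it has no non-trivial colorings,
    as for the one-circle diagram. *)
Record diagram := Diagram {
  dn : nat;
  dover : 'I_dn -> 'I_dn;
  dsign : 'I_dn -> bool
}.

Definition dbeta (D : diagram) (i : 'I_(dn D)) : 'I_(dn D) :=
  if dsign i then i else ordS i.
Definition dgamma (D : diagram) (i : 'I_(dn D)) : 'I_(dn D) :=
  if dsign i then ordS i else i.

Definition is_coloring (Q : quandle) (D : diagram) (f : {ffun 'I_(dn D) -> Q}) : bool :=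
  [forall i : 'I_(dn D), qop (f (dover i)) (f (dbeta i)) == f (dgamma i)].

Definition nontrivial_coloring (Q : quandle) (D : diagram) (f : {ffun 'I_(dn D) -> Q}) : bool :=
  [exists i : 'I_(dn D), exists j : 'I_(dn D), f i != f j].

Definition col (Q : quandle) (D : diagram) : nat :=
  #|[set f : {ffun 'I_(dn D) -> Q} | is_coloring f && nontrivial_coloring f]|.

(* Main.v *)
Require Import Defs.
From mathcomp Require Import all_boot.
From Stdlib Require Import Classical ClassicalEpsilon.

Lemma mk_div (T : finType) (op : T -> T -> T) (inj : forall a, injective (op a)) :
  forall a b : T, exists! x : T, op a x = b.
Proof.
move=> a b; have [g opK gK] := injF_bij (inj a).
exists (g b); split; first exact: gK.
by move=> x <-; rewrite opK.
Qed.

Definition mkQ (T : finType) (op : T -> T -> T)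
  (idem : forall a, op a a = a) (inj : forall a, injective (op a))
  (dist : forall a b c, op a (op b c) = op (op a b) (op a c)) : quandle :=
  @Quandle T op idem (@mk_div T op inj) dist.

Lemma hom_col (Q1 Q2 : quandle) (D : diagram) (h : Q1 -> Q2)
  (hm : forall a b, h (qop a b) = qop (h a) (h b)) (f : {ffun 'I_(dn D) -> Q1}) :
  is_coloring f -> is_coloring [ffun i => h (f i)].
Proof.
move=> /forallP H; apply/forallP => i; rewrite !ffunE -hm.
by move/eqP: (H i) => ->.
Qed.

Lemma col_pos (Q : quandle) (D : diagram) :
  0 < col Q D <-> exists f : {ffun 'I_(dn D) -> Q}, is_coloring f /\ nontrivial_coloring f.
Proof.
rewrite /col card_gt0; split.
  by case/set0Pn => f; rewrite inE => /andP[]; exists f.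
by case=> f [h1 h2]; apply/set0Pn; exists f; rewrite inE h1 h2.
Qed.

Lemma left_inj (Q : quandle) (a : Q) : injective (qop a).
Proof.
move=> x y E; have [z [_ U]] := qdiv a (qop a x).
by rewrite -(U x erefl) -(U y (esym E)).
Qed.

Definition subop (Q : quandle) (P : pred Q) (cl : forall x y, P x -> P y -> P (qop x y))
  (x y : {x : Q | P x}) : {x : Q | P x} :=
  exist _ (qop (val x) (val y)) (cl _ _ (valP x) (valP y)).

Definition subQ (Q : quandle) (P : pred Q) (cl : forall x y, P x -> P y -> P (qop x y)) : quandle.
Proof.
refine (@mkQ {x : Q | P x} (@subop Q P cl) _ _ _).
- by move=> a; apply: val_inj; rewrite /= qidem.
- by move=> a x y /(congr1 val) /= /left_inj /val_inj.
- by move=> a b c; apply: val_inj; rewrite /= qdist.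
Defined.

Lemma subQ_card (Q : quandle) (P : pred Q) cl (z : Q) : ~~ P z -> #|@subQ Q P cl| < #|Q|.
Proof.
move=> nz; rewrite /= card_sig.
rewrite -(cardC [pred x | P x]) -addn1 leq_add2l. apply/card_gt0P; exists z; by rewrite !inE. Qed.

Set Implicit Arguments. Unset Strict Implicit.
Lemma surj_inj (T : finType) (f : T -> T) : (forall y, exists x, f x = y) -> injective f.
Proof.
move=> S.
pose g y := odflt y [pick x | f x == y].
have gK : cancel g f.
  move=> y; rewrite /g; case: pickP => [x /eqP //|].
  by have [x <-] := S y => /(_ x); rewrite eqxx.
have [g' g'K gK'] := injF_bij (can_inj gK).
have E : forall x, f x = g' x by move=> x; rewrite -{1}(gK' x) gK.
by move=> x y; rewrite !E => /(congr1 g); rewrite !gK'.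
Qed.

Definition rb (Q : quandle) (R : Q -> Q -> Prop) (x y : Q) : bool :=
  if excluded_middle_informative (R x y) then true else false.

Lemma rbP (Q : quandle) (R : Q -> Q -> Prop) x y : rb R x y <-> R x y.
Proof. by rewrite /rb; case: excluded_middle_informative. Qed.

Definition canon (Q : quandle) (R : Q -> Q -> Prop) (x : Q) : Q :=
  odflt x [pick y | rb R x y].

Lemma canon_r (Q : quandle) (R : Q -> Q -> Prop) (H : congruence R) x : R x (canon R x).
Proof.
rewrite /canon; case: pickP => [y /rbP //|/(_ x)].
by have [r _] := H; move/rbP: (r x) => ->.
Qed.

Lemma canon_eq (Q : quandle) (R : Q -> Q -> Prop) (H : congruence R) x y :
  R x y -> canon R x = canon R y.
Proof.
have [r [s [t _]]] := H => Rxy.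
rewrite /canon (@eq_pick _ [pred z | rb R x z] [pred z | rb R y z]).
  case: pickP => // /(_ y) /=; have: rb R y y by apply/rbP.
  by move=> ->.
move=> z /=; apply/idP/idP => /rbP h; apply/rbP; eauto.
Qed.

Lemma canon_eqR (Q : quandle) (R : Q -> Q -> Prop) (H : congruence R) x y :
  canon R x = canon R y -> R x y.
Proof.
have [r [s [t _]]] := H => E.
apply: (t _ (canon R x)); first exact: canon_r.
by rewrite E; apply: s; apply: canon_r.
Qed.

Lemma canon_idem (Q : quandle) (R : Q -> Q -> Prop) (H : congruence R) x :
  canon R (canon R x) == canon R x.
Proof.
have [r [s [t _]]] := H; apply/eqP; apply: canon_eq => //; apply: s; exact: canon_r.
Qed.

Definition cls (Q : quandle) (R : Q -> Q -> Prop) (H : congruence R) (x : Q) :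
  {x : Q | canon R x == x} := exist _ (canon R x) (canon_idem H x).

Definition quotop (Q : quandle) (R : Q -> Q -> Prop) (H : congruence R)
  (x y : {x : Q | canon R x == x}) : {x : Q | canon R x == x} :=
  cls H (qop (val x) (val y)).

Lemma quot_surj (Q : quandle) (R : Q -> Q -> Prop) (H : congruence R) a :
  injective (@quotop Q R H a).
Proof.
apply: surj_inj => b.
have [x0 [E _]] := qdiv (val a) (val b).
exists (cls H x0); apply: val_inj; rewrite /= -(eqP (valP b)) -E.
apply: canon_eq => //; have [r [s [t c]]] := H; apply: c => //.
by apply: s; apply: canon_r.
Qed.

Definition quotQ (Q : quandle) (R : Q -> Q -> Prop) (H : congruence R) : quandle.
Proof.
refine (@mkQ {x : Q | canon R x == x} (@quotop Q R H) _ (@quot_surj Q R H) _).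
- by move=> a; apply: val_inj; rewrite /= qidem; apply/eqP; exact: (valP a).
- move=> a b c; apply: val_inj => /=; apply: canon_eq => //.
  have [r [s [t cc]]] := H.
  have ca : forall z, R (canon R z) z by move=> z; apply: s; apply: canon_r.
  apply: (t _ (qop (sval a) (qop (sval b) (sval c)))); first exact: cc (r _) (ca _).
  rewrite qdist; apply: cc; apply: s; apply: ca.
Defined.
Set Implicit Arguments. Unset Strict Implicit.

Lemma quot_card (Q : quandle) (R : Q -> Q -> Prop) (H : congruence R) a b :
  R a b -> a <> b -> #|quotQ H| < #|Q|.
Proof.
move=> Rab nab.
have [z nz] : exists z, canon R z != z.
  case: (boolP (canon R a == a)) => [/eqP ea|]; last by exists a.
  exists b; apply/eqP => eb; apply: nab; rewrite -ea -eb; exact: canon_eq.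
rewrite /= card_sig.
rewrite -(cardC [pred x | canon R x == x]) -addn1 leq_add2l.
by apply/card_gt0P; exists z; rewrite !inE.
Qed.

Lemma main (D : diagram) n (Q : quandle) : #|Q| < n -> 0 < col Q D ->
  exists Q' : quandle, simple_quandle Q' /\ #|Q'| <= #|Q| /\ 0 < col Q' D.
Proof.
elim: n Q => [//|n IH] Q Qn /col_pos [f [fc /existsP [i /existsP [j fij]]]].
case: (classic (simple_quandle Q)) => [sQ|nsQ]; first by exists Q; split; last (split=>//; apply/col_pos; exists f; split=>//; apply/existsP; exists i; apply/existsP; exists j).
have Q1 : 1 < #|Q| by apply/card_gt1P; exists (f i), (f j).
have [R HR] : exists R : Q -> Q -> Prop, ~ (congruence R -> (forall a b, R a b <-> a = b) \/ (forall a b, R a b)).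
  apply: not_all_ex_not => Hall; apply: nsQ; split => //.
have [H /not_or_and [nid ntot]] := imply_to_and _ _ HR.
have [r [s [t cc]]] := H.
have [a [b [Rab nab]]] : exists a b, R a b /\ a <> b.
  apply: NNPP => nex; apply: nid => a b; split.
    by move=> Rab; apply: NNPP => nab; apply: nex; exists a, b.
  by move=> ->.
have [c [d nRcd]] : exists c d, ~ R c d.
  apply: NNPP => nex; apply: ntot => c d; apply: NNPP => nR; apply: nex; exists c, d; exact: nR.
case: (classic (exists k l, ~ R (f k) (f l))) => [[k [l nkl]]|allR].
  have hm : forall x y, cls H (qop x y) = @quotop Q R H (cls H x) (cls H y).
    move=> x y; apply: val_inj => /=; apply: canon_eq => //; apply: cc; exact: canon_r.
  have qc : #|quotQ H| < #|Q| by exact: quot_card Rab nab.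
  have [Q'' [sQ'' [cQ'' colQ'']]] : exists Q' : quandle, simple_quandle Q' /\ #|Q'| <= #|quotQ H| /\ 0 < col Q' D.
    apply: IH; first exact: leq_trans qc Qn.
    apply/col_pos; exists [ffun x => cls H (f x)]; split.
      exact: (@hom_col Q (quotQ H) D (cls H) hm f fc).
    apply/existsP; exists k; apply/existsP; exists l; rewrite !ffunE.
    apply/eqP => /(congr1 val) /= /(canon_eqR H); exact: nkl.
  exists Q''; split; [exact: sQ''|split; [exact: leq_trans cQ'' (ltnW qc)|exact: colQ'']].
have allR' : forall k l, R (f k) (f l).
  by move=> k l; apply: NNPP => nR; apply: allR; exists k, l.
pose P := [pred x | rb R (f i) x].
have cl : forall x y, P x -> P y -> P (qop x y).
  move=> x y /rbP Px /rbP Py; apply/rbP; rewrite -(qidem (f i)); exact: cc.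
have [z nz] : exists z, ~~ P z.
  case: (classic (R (f i) c)) => Rc; last by exists c; apply/negP => /rbP.
  exists d; apply/negP => /rbP Rd; apply: nRcd; apply: t (s _ _ Rc) Rd.
have qc := @subQ_card Q P cl z nz.
have Pf : forall k, P (f k) by move=> k; apply/rbP.
have [Q'' [sQ'' [cQ'' colQ'']]] : exists Q' : quandle, simple_quandle Q' /\ #|Q'| <= #|@subQ Q P cl| /\ 0 < col Q' D.
  apply: IH; first exact: leq_trans qc Qn.
  apply/col_pos; exists [ffun x => (exist _ (f x) (Pf x) : @subQ Q P cl)]; split.
    apply/forallP => k; apply/eqP; apply: val_inj; rewrite /= !ffunE /=.
    by move/forallP: fc => /(_ k) /eqP.
  apply/existsP; exists i; apply/existsP; exists j; rewrite !ffunE.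
  by apply/eqP => /(congr1 val) /= E; rewrite E eqxx in fij.
exists Q''; split; [exact: sQ''|split; [exact: leq_trans cQ'' (ltnW qc)|exact: colQ'']].
Qed.

Theorem lemma2 (Q : quandle) (D : diagram) :
  0 < col Q D ->
  exists Q' : quandle, simple_quandle Q' /\ #|Q'| <= #|Q| /\ 0 < col Q' D.
Proof. exact: (@main D (#|Q|.+1) Q (ltnSn _)). Qed.
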